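(* Let $S_n(t)=\sum_{\pi\in\mathfrak{S}_n(2413,3142)}t^{\mathrm{des}(\pi)}$ for $n\ge1$. For $n\geq2$, $$S_n(t)=(1+t)S_{n-1}(t)+t\sum_{j=1}^{n-2}S_j(t)\biggl(S_{n-j-1}(t)+\sum_{i=1}^{n-j-1}S_i(t)S_{n-j-i}(t)\biggr).$$ Equivalently, $S(t,z):=\sum_{n\geq1}S_n(t)z^n$ satisfies $$S(t,z)=z+(1+t)zS(t,z)+tzS^2(t,z)+tS^3(t,z).$$
   Context: $\mathfrak{S}_n(2413,3142)$ is the set of permutations of $[n]$ avoiding the patterns $2413$ and $3142$ (no subsequence has the same relative order as $2413$ or $3142$); $\mathrm{des}(\pi)=\#\{i\in[n-1]:\pi_i>\pi_{i+1}\}$. *)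

(* Defs.v *)
From mathcomp Require Import all_boot all_order all_algebra all_fingroup.
Set Implicit Arguments. Unset Strict Implicit. Unset Printing Implicit Defensive.
Import GRing.Theory.

(* Permutations of [n] are represented by 's : 'S_n' (permutations of {0..n-1});
   the one-line notation is s 0, s 1, ..., s (n-1). *)

Definition occurrence (n : nat) (s : 'S_n) (p : seq nat)
    (f : {ffun 'I_(size p) -> 'I_n}) : bool :=
  [forall a : 'I_(size p), forall b : 'I_(size p),
     ((a < b)%N ==> (f a < f b)%N) &&
     (((s (f a)) < (s (f b)))%N == (nth 0 p a < nth 0 p b)%N)].

Definition contains (n : nat) (s : 'S_n) (p : seq nat) : bool :=
  [exists f : {ffun 'I_(size p) -> 'I_n}, @occurrence n s p f].

Definition sep_avoid (n : nat) (s : 'S_n) : bool :=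
  ~~ contains s [:: 2; 4; 1; 3] && ~~ contains s [:: 3; 1; 4; 2].

Definition des (n : nat) (s : 'S_n) : nat :=
  #|[pred i : 'I_n | [exists j : 'I_n, (val j == (val i).+1) && (s j < s i)%N]]|.

Definition Spoly (n : nat) : {poly int} :=
  (\sum_(s : 'S_n | sep_avoid s) 'X^(des s))%R.

(* Main.v *)
Require Import Defs.
From mathcomp Require Import all_boot all_order all_algebra all_fingroup.
From mathcomp Require Import zify ring.
Set Implicit Arguments. Unset Strict Implicit. Unset Printing Implicit Defensive.
Import GRing.Theory.

Definition P2413 (a b c d : nat) := (c < a) && (a < d) && (d < b).
Definition P3142 (a b c d : nat) := (b < d) && (d < a) && (a < c).
Definition has4 (P : nat -> nat -> nat -> nat -> bool) (l : seq nat) :=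
  exists a b c d, subseq [:: a; b; c; d] l /\ P a b c d.
Definition sepl l := ~ has4 P2413 l /\ ~ has4 P3142 l.

Lemma has4_sub P l l' : subseq l l' -> has4 P l -> has4 P l'.
Proof.
move=> sl [a [b [c [d [H1 H2]]]]]; exists a, b, c, d; split=> //.
exact: subseq_trans sl.
Qed.

Lemma sepl_sub l l' : subseq l l' -> sepl l' -> sepl l.
Proof. by move=> sl [H1 H2]; split=> H; [apply: H1|apply: H2]; apply: has4_sub H. Qed.

Lemma subseq_iota_sorted n m ix : sorted ltn ix ->
  all (fun i => m <= i < m + n) ix -> subseq ix (iota m n).
Proof.
elim: n m ix => [|n IH] m [|i ix] //=.
  by rewrite addn0 => _ /andP[/andP[H1 H2]]; lia.
move=> pth /andP[/andP[H1 H2] Hall].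
have srt : sorted ltn ix := path_sorted pth.
have lt : all (ltn i) ix by move: pth; rewrite path_sortedE //; [case/andP|exact: ltn_trans].
case: eqP => [E|ne].
  apply: IH => //; apply/allP => j jix.
  have := allP Hall j jix; have := allP lt j jix; rewrite /= -E; lia.
apply: IH => //=; apply/andP; split.
  by apply/andP; split; lia.
apply/allP => j jix.
have := allP Hall j jix; have := allP lt j jix => /=; lia.
Qed.

Lemma subseq_nth4 (l : seq nat) a b c d :
  subseq [:: a; b; c; d] l <->
  exists i j k m, [/\ i < j, j < k, k < m, m < size l &
     [/\ a = nth 0 l i, b = nth 0 l j, c = nth 0 l k & d = nth 0 l m]].
Proof.
have El : l = map (nth 0 l) (iota 0 (size l)) by rewrite map_nth_iota0 // take_size.
split.
  case/subseqP => mk szm E.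
  have : [:: a; b; c; d] = map (nth 0 l) (mask mk (iota 0 (size l))).
    by rewrite map_mask -El.
  have sub : subseq (mask mk (iota 0 (size l))) (iota 0 (size l)) by exact: mask_subseq.
  move: sub; case: (mask _ _) => [|i [|j [|k [|m [|? ?]]]]] //= sub [-> -> -> -> ].
  have srt := subseq_sorted ltn_trans sub (iota_ltn_sorted 0 (size l)).
  have mm : m \in iota 0 (size l) by apply: (mem_subseq sub); rewrite !inE eqxx !orbT.
  move: srt mm => /=; rewrite mem_iota /= => /and4P[H1 H2 H3 _] H4.
  by exists i, j, k, m.
case=> [i [j [k [m [H1 H2 H3 H4 [-> -> -> ->]]]]]].
rewrite [X in subseq _ X]El.
apply: (map_subseq (nth 0 l) (s1 := [:: i; j; k; m])).
apply: subseq_iota_sorted => /=; first by rewrite H1 H2 H3.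
apply/and5P; split=> //; lia.
Qed.

Definition tolist n (s : 'S_n) : seq nat := [seq val (s i) | i <- enum 'I_n].

Lemma size_tolist n (s : 'S_n) : size (tolist s) = n.
Proof. by rewrite size_map size_enum_ord. Qed.

Lemma nth_tolist n (s : 'S_n) (i : 'I_n) : nth 0 (tolist s) i = s i.
Proof. by rewrite (nth_map i) ?size_enum_ord // nth_ord_enum. Qed.

Lemma tolist_inj n : injective (@tolist n).
Proof.
move=> s1 s2 E; apply/permP => i; apply: ord_inj.
by have := congr1 (fun l => nth 0 l i) E; rewrite !nth_tolist.
Qed.

Lemma tolist_perm n (s : 'S_n) : perm_eq (tolist s) (iota 0 n).
Proof.
apply: uniq_perm; rewrite ?iota_uniq //.
  rewrite map_inj_uniq ?enum_uniq // => i j /val_inj; exact: perm_inj.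
move=> x; rewrite mem_iota /=; apply/mapP/idP => [[i _ ->]|xlt]; first exact: ltn_ord.
by exists ((s^-1)%g (Ordinal xlt)); rewrite ?mem_enum // permKV.
Qed.

Lemma tolist_surj n l : perm_eq l (iota 0 n) -> exists s : 'S_n, tolist s = l.
Proof.
move=> pl; have sz : size l = n by rewrite (perm_size pl) size_iota.
have lt : forall i : 'I_n, nth 0 l i < n.
  move=> i; have : nth 0 l i \in iota 0 n by rewrite -(perm_mem pl) mem_nth // sz.
  by rewrite mem_iota.
pose g := fun i : 'I_n => Ordinal (lt i).
have ginj : injective g.
  move=> i j /(congr1 val) /= /eqP; rewrite nth_uniq ?sz //.
    by move/eqP/val_inj.
  by rewrite (perm_uniq pl) iota_uniq.
exists (perm ginj); apply: (@eq_from_nth _ 0); rewrite ?size_tolist ?sz // => i ltin.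
by rewrite -[i]/(val (Ordinal ltin)) nth_tolist permE.
Qed.

Lemma contains_2413 n (s : 'S_n) : contains s [:: 2; 4; 1; 3] <-> has4 P2413 (tolist s).
Proof.
split.
  case/existsP => f /forallP Hf.
  have H := fun x y => andP (forallP (Hf x) y).
  pose o0 : 'I_4 := Ordinal (isT : 0 < 4). pose o1 : 'I_4 := Ordinal (isT : 1 < 4).
  pose o2 : 'I_4 := Ordinal (isT : 2 < 4). pose o3 : 'I_4 := Ordinal (isT : 3 < 4).
  have [/implyP /= h01 _] := H o0 o1. have [/implyP /= h12 _] := H o1 o2.
  have [/implyP /= h23 _] := H o2 o3.
  have [_ /eqP /= v20] := H o2 o0. have [_ /eqP /= v03] := H o0 o3.
  have [_ /eqP /= v31] := H o3 o1.
  exists (val (s (f o0))), (val (s (f o1))), (val (s (f o2))), (val (s (f o3))); split.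
    apply/subseq_nth4; exists (f o0), (f o1), (f o2), (f o3); split.
    - exact: h01 isT.
    - exact: h12 isT.
    - exact: h23 isT.
    - by rewrite size_tolist.
    - by rewrite !nth_tolist.
  by rewrite /P2413 v20 v03 v31.
case=> a [b [c [d [/subseq_nth4 [i [j [k [m [H1 H2 H3 H4 [Ea Eb Ec Ed]]]]]] HP]]]].
rewrite size_tolist in H4.
have Hi : i < n by lia. have Hj : j < n by lia. have Hk : k < n by lia.
pose f := [ffun x : 'I_4 => nth (Ordinal Hi) [:: Ordinal Hi; Ordinal Hj; Ordinal Hk; Ordinal H4] x].
apply/existsP; exists f; apply/forallP => x; apply/forallP => y.
move: HP; rewrite /P2413 Ea Eb Ec Ed.
rewrite -[i]/(val (Ordinal Hi)) -[j]/(val (Ordinal Hj)) -[k]/(val (Ordinal Hk)) -[m]/(val (Ordinal H4)).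
rewrite !nth_tolist /=.
case: x => [[|[|[|[|x]]]] Hx] //; case: y => [[|[|[|[|y]]]] Hy] //; rewrite !ffunE /=;
  move=> HP; rewrite ?ltnn //=; try (apply/andP; split); try lia.
all: apply/eqP; lia.
Qed.

Lemma contains_3142 n (s : 'S_n) : contains s [:: 3; 1; 4; 2] <-> has4 P3142 (tolist s).
Proof.
split.
  case/existsP => f /forallP Hf.
  have H := fun x y => andP (forallP (Hf x) y).
  pose o0 : 'I_4 := Ordinal (isT : 0 < 4). pose o1 : 'I_4 := Ordinal (isT : 1 < 4).
  pose o2 : 'I_4 := Ordinal (isT : 2 < 4). pose o3 : 'I_4 := Ordinal (isT : 3 < 4).
  have [/implyP /= h01 _] := H o0 o1. have [/implyP /= h12 _] := H o1 o2.
  have [/implyP /= h23 _] := H o2 o3.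
  have [_ /eqP /= v20] := H o1 o3. have [_ /eqP /= v03] := H o3 o0.
  have [_ /eqP /= v31] := H o0 o2.
  exists (val (s (f o0))), (val (s (f o1))), (val (s (f o2))), (val (s (f o3))); split.
    apply/subseq_nth4; exists (f o0), (f o1), (f o2), (f o3); split.
    - exact: h01 isT.
    - exact: h12 isT.
    - exact: h23 isT.
    - by rewrite size_tolist.
    - by rewrite !nth_tolist.
  by rewrite /P3142 v20 v03 v31.
case=> a [b [c [d [/subseq_nth4 [i [j [k [m [H1 H2 H3 H4 [Ea Eb Ec Ed]]]]]] HP]]]].
rewrite size_tolist in H4.
have Hi : i < n by lia. have Hj : j < n by lia. have Hk : k < n by lia.
pose f := [ffun x : 'I_4 => nth (Ordinal Hi) [:: Ordinal Hi; Ordinal Hj; Ordinal Hk; Ordinal H4] x].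
apply/existsP; exists f; apply/forallP => x; apply/forallP => y.
move: HP; rewrite /P3142 Ea Eb Ec Ed.
rewrite -[i]/(val (Ordinal Hi)) -[j]/(val (Ordinal Hj)) -[k]/(val (Ordinal Hk)) -[m]/(val (Ordinal H4)).
rewrite !nth_tolist /=.
case: x => [[|[|[|[|x]]]] Hx] //; case: y => [[|[|[|[|y]]]] Hy] //; rewrite !ffunE /=;
  move=> HP; rewrite ?ltnn //=; try (apply/andP; split); try lia.
all: apply/eqP; lia.
Qed.

Fixpoint desl (l : seq nat) : nat :=
  if l is x :: r then (if r is y :: _ then (y < x) else false) + desl r else 0.

Lemma desl_count l : desl l = count (fun i => nth 0 l i.+1 < nth 0 l i) (iota 0 (size l).-1).
Proof.
elim: l => [|x r IH] //=; case: r IH => [|y r'] //= IH.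
rewrite IH /= -[iota 1 _]/(iota (1+0) _) iotaDl count_map /=; congr (_ + _).
Qed.

Lemma card_count (T : finType) (P : pred T) : #|P| = count P (enum T).
Proof. rewrite cardE /enum_mem size_filter; congr count; exact: (esym (filter_predT _)). Qed.

Lemma des_tolist n (s : 'S_n) : des s = desl (tolist s).
Proof.
rewrite /des card_count desl_count size_tolist.
set L := tolist s.
transitivity (count (fun i => (i.+1 < n) && (nth 0 L i.+1 < nth 0 L i)) (iota 0 n)).
  rewrite -val_enum_ord count_map; apply: eq_count => i /=.
  apply/existsP/andP => [[j /andP[/eqP Ej lt]]|[lt1 lt2]].
    by split; [rewrite -Ej ltn_ord | rewrite -Ej /L !nth_tolist].
  exists (Ordinal lt1); apply/andP; split => //.
  by rewrite /L -[i.+1]/(val (Ordinal lt1)) !nth_tolist in lt2.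
case: n s L => [|n] s L //.
have -> : iota 0 n.+1 = iota 0 n ++ [:: n] by rewrite -addn1 iotaD.
rewrite count_cat /= ltnn andFb /= -[RHS]addn0; congr (_ + _).
apply: eq_in_count => i; rewrite mem_iota /= => H.
by rewrite ltnS H.
Qed.
Definition W n : seq (seq nat) := map (@tolist n) (enum [pred s : 'S_n | sep_avoid s]).

Lemma sep_avoidE n (s : 'S_n) : sep_avoid s <-> sepl (tolist s).
Proof.
rewrite /sep_avoid /sepl; split.
  by case/andP => /negP H1 /negP H2; split => H; [apply: H1|apply: H2];
   [apply/contains_2413|apply/contains_3142].
by case=> H1 H2; apply/andP; split; apply/negP => H;
  [apply: H1; apply/contains_2413|apply: H2; apply/contains_3142].
Qed.

Lemma W_uniq n : uniq (W n).
Proof. by rewrite map_inj_uniq ?enum_uniq //; exact: tolist_inj. Qed.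

Lemma memW n l : l \in W n <-> perm_eq l (iota 0 n) /\ sepl l.
Proof.
split.
  case/mapP => s; rewrite mem_enum inE => /sep_avoidE H ->; split=> //.
  exact: tolist_perm.
case=> pl H; have [s Es] := tolist_surj pl.
apply/mapP; exists s => //; rewrite mem_enum inE; apply/sep_avoidE; by rewrite Es.
Qed.

Definition F (l : seq nat) : {poly int} := 'X^(desl l).

Lemma Spoly_W n : Spoly n = (\sum_(l <- W n) F l)%R.
Proof.
rewrite /Spoly /W big_map big_enum_cond /=.
apply: eq_big => [s|s _]; first by rewrite inE andbT.
by rewrite /F des_tolist.
Qed.

Definition ltall (u v : seq nat) := all (fun x => all (fun y => x < y) v) u.

Lemma ltallP u v : reflect (forall x y, x \in u -> y \in v -> x < y) (ltall u v).
Proof.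
apply: (iffP allP) => [H x y xu yv|H x xu]; first exact: (allP (H x xu)).
by apply/allP => y yv; apply: H.
Qed.

Lemma sub4 (c a b x : nat) w w'' v :
  c \in w -> a \in w'' -> b \in v ->
  subseq [:: c; a; b; x] (w ++ (w'' ++ (v ++ [:: x]))).
Proof.
move=> cw aw bv.
apply: (cat_subseq (s1 := [:: c])); first by rewrite sub1seq.
apply: (cat_subseq (s1 := [:: a])); first by rewrite sub1seq.
apply: (cat_subseq (s1 := [:: b])); first by rewrite sub1seq.
exact: subseq_refl.
Qed.

Lemma decomp_aux n l : size l <= n -> uniq l -> 2 <= size l -> sepl l ->
  exists u v, [/\ u != [::], v != [::], l = u ++ v & ltall u v \/ ltall v u].
Proof.
elim: n l => [|n IH] l szl ul sz2 sl; first by lia.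
case/lastP: l szl ul sz2 sl => [|l' x] //; rewrite size_rcons ltnS => szl ul sz2 sl.
have [ux ul'] : x \notin l' /\ uniq l' by move: ul; rewrite rcons_uniq => /andP.
case: (ltnP 1 (size l')) => sz1; last first.
  case: l' sz1 sz2 ux {ul ul' sl szl} => [|y [|? ?]] //= _ _.
  rewrite inE => nyx; exists [:: y], [:: x]; split => //.
  rewrite /ltall /= !andbT.
  by case: (ltngtP y x) nyx => [h|h|E] nyx; [left|right|by []].
have sl' : sepl l' by apply: sepl_sub sl; exact: subseq_rcons.
have [u [v [un vn El' Huv]]] := IH l' szl ul' sz1 sl'.
have szu : size u < size l' by rewrite El' size_cat; case: v vn {El' Huv} => //= ? ?; lia.
have subux : subseq (rcons u x) (rcons l' x).
  by rewrite El' -!cats1 -catA; apply: cat_subseq; [exact: subseq_refl|exact: suffix_subseq].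
have IHu : exists w w'', [/\ w != [::], u = w ++ w'' &
              (ltall w (rcons w'' x) \/ ltall (rcons w'' x) w)].
  have [||||w [w' [wn wn' Ew Hw]]] := IH (rcons u x).
  - by rewrite size_rcons; lia.
  - exact: subseq_uniq subux ul.
  - by rewrite size_rcons; case: u un {El' Huv szu subux}.
  - exact: sepl_sub subux sl.
  case/lastP: w' wn' Ew Hw => [|w'' x'] // _; rewrite -rcons_cat => /rcons_inj [Eu Ex].
  by rewrite -Ex in Eu *; exists w, w''.
have [c [w1 Ec]] : exists c w1, u = c :: w1 by case: u un {El' Huv szu subux IHu}=> // c w1; exists c, w1.
have [b [v1 Ev]] : exists b v1, v = b :: v1 by case: v vn {El' Huv szu} => // b v1; exists b, v1.
have cu : c \in u by rewrite Ec inE eqxx.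
have bv : b \in v by rewrite Ev inE eqxx.
have xnu : x \notin u by apply: contra ux; rewrite El' mem_cat => ->.
rewrite El'.
case: Huv => /ltallP Huv.
  case: (boolP (has (fun a => a < x) u)) => hx.
    have [w [w'' [wn Eu Hw]]] := IHu.
    case: Hw => /ltallP Hw.
      exists w, (w'' ++ v ++ [:: x]); split => //.
      - by rewrite Ev; case: (w'').
      - by rewrite Eu -cats1 -!catA.
      left; apply/ltallP => y z yw; rewrite !mem_cat inE => /orP[zw|/orP[zv|/eqP ->]].
      + by apply: Hw; rewrite // mem_rcons inE zw orbT.
      + by apply: Huv => //; rewrite Eu mem_cat yw.
      + by apply: Hw; rewrite // mem_rcons inE eqxx.
    exfalso; case/hasP: hx => a au ax.
    have aw : a \in w'' .
      move: au; rewrite Eu mem_cat => /orP[aw|//].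
      by have := Hw x a; rewrite mem_rcons inE eqxx aw => /(_ isT isT); lia.
    case: w wn Eu Hw => [|c' w2] // _ Eu Hw.
    apply: (proj2 sl); exists c', a, b, x; split.
      by rewrite El' Eu -cats1 -!catA; apply: sub4; rewrite // inE eqxx.
    rewrite /P3142 ax /=.
    have -> : x < c' by apply: Hw; rewrite ?mem_rcons inE eqxx.
    by apply: Huv; rewrite // Eu mem_cat inE eqxx.
  exists (u ++ v), [:: x]; split => //; first by rewrite Ec.
    by rewrite cats1.
  right; apply/ltallP => y z; rewrite inE => /eqP ->.
  have xu : forall z, z \in u -> x < z.
    move=> z' zu; rewrite ltn_neqAle; apply/andP; split.
      by apply: contra xnu => /eqP ->.
    by move: hx; rewrite -all_predC => /allP/(_ z' zu) /=; rewrite -leqNgt.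
  rewrite mem_cat => /orP[zu|zv]; first exact: xu.
  by apply: (ltn_trans (xu c cu)); apply: Huv.
case: (boolP (has (fun a => x < a) u)) => hx.
  have [w [w'' [wn Eu Hw]]] := IHu.
  case: Hw => /ltallP Hw; last first.
    exists w, (w'' ++ v ++ [:: x]); split => //.
    - by rewrite Ev; case: (w'').
    - by rewrite Eu -cats1 -!catA.
    right; apply/ltallP => y z; rewrite !mem_cat inE => /orP[yw|/orP[yv|/eqP ->]] zw.
    + by apply: Hw; rewrite // mem_rcons inE yw orbT.
    + by apply: Huv => //; rewrite Eu mem_cat zw.
    + by apply: Hw; rewrite // mem_rcons inE eqxx.
  exfalso; case/hasP: hx => a au ax.
  have aw : a \in w'' .
    move: au; rewrite Eu mem_cat => /orP[aw|//].
    by have := Hw a x; rewrite mem_rcons inE eqxx aw => /(_ isT isT); lia.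
  case: w wn Eu Hw => [|c' w2] // _ Eu Hw.
  apply: (proj1 sl); exists c', a, b, x; split.
    by rewrite El' Eu -cats1 -!catA; apply: sub4; rewrite // inE eqxx.
  rewrite /P2413 ax andbT.
  have -> : c' < x by apply: Hw; rewrite ?mem_rcons inE eqxx.
  by rewrite andbT; apply: Huv; rewrite // Eu mem_cat inE eqxx.
exists (u ++ v), [:: x]; split => //; first by rewrite Ec.
  by rewrite cats1.
left; apply/ltallP => y z yuv; rewrite inE => /eqP ->.
have xu : forall z, z \in u -> z < x.
  move=> z' zu; rewrite ltn_neqAle; apply/andP; split.
    by apply: contra xnu => /eqP <-.
  by move: hx; rewrite -all_predC => /allP/(_ z' zu) /=; rewrite -leqNgt.
move: yuv; rewrite mem_cat => /orP[yu|yv]; first exact: xu.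
by apply: (ltn_trans _ (xu c cu)); apply: Huv.
Qed.

Lemma decomp l : uniq l -> 2 <= size l -> sepl l ->
  exists u v, [/\ u != [::], v != [::], l = u ++ v & ltall u v \/ ltall v u].
Proof. exact: (@decomp_aux (size l)). Qed.

Lemma subseq_cat_split (s u v : seq nat) : subseq s (u ++ v) ->
  exists s1 s2, [/\ s = s1 ++ s2, subseq s1 u & subseq s2 v].
Proof.
case/subseqP => m szm ->.
rewrite -(cat_take_drop (size u) m) mask_cat; last by rewrite size_takel // szm size_cat leq_addr.
by exists (mask (take (size u) m) u), (mask (drop (size u) m) v); split; rewrite ?mask_subseq.
Qed.

Definition nosplitP (P : nat -> nat -> nat -> nat -> bool) :=
  forall a b c d, P a b c d ->
   [/\ ~~ [&& a < b, a < c & a < d], ~~ [&& a < c, a < d, b < c & b < d] &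
       ~~ [&& a < d, b < d & c < d]].

Lemma has4_cat P u v : nosplitP P -> ltall u v -> has4 P (u ++ v) -> has4 P u \/ has4 P v.
Proof.
move=> HP /ltallP Huv [a [b [c [d [/subseq_cat_split [s1 [s2 [E sub1 sub2]]] Pabcd]]]]].
have [H1 H2 H3] := HP _ _ _ _ Pabcd.
have m1 := mem_subseq sub1; have m2 := mem_subseq sub2.
case: s1 E sub1 m1 => [|x1 [|x2 [|x3 [|x4 [|? ?]]]]] //= E sub1 m1.
- by right; exists a, b, c, d; rewrite E.
- case: E => *; subst; move: H1 => /negP []; apply/and3P.
  by split; apply: Huv; rewrite ?m1 ?m2 // !inE eqxx ?orbT.
- case: E => *; subst; move: H2 => /negP []; apply/and4P.
  by split; apply: Huv; rewrite ?m1 ?m2 // !inE eqxx ?orbT.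
- case: E => *; subst; move: H3 => /negP []; apply/and3P.
  by split; apply: Huv; rewrite ?m1 ?m2 // !inE eqxx ?orbT.
- case: E => *; subst; left; exists x1, x2, x3, x4; split => //.
Qed.

Definition nosplitM (P : nat -> nat -> nat -> nat -> bool) :=
  forall a b c d, P a b c d ->
   [/\ ~~ [&& b < a, c < a & d < a], ~~ [&& c < a, d < a, c < b & d < b] &
       ~~ [&& d < a, d < b & d < c]].

Lemma has4_catM P u v : nosplitM P -> ltall v u -> has4 P (u ++ v) -> has4 P u \/ has4 P v.
Proof.
move=> HP /ltallP Huv [a [b [c [d [/subseq_cat_split [s1 [s2 [E sub1 sub2]]] Pabcd]]]]].
have [H1 H2 H3] := HP _ _ _ _ Pabcd.
have m1 := mem_subseq sub1; have m2 := mem_subseq sub2.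
case: s1 E sub1 m1 => [|x1 [|x2 [|x3 [|x4 [|? ?]]]]] //= E sub1 m1.
- by right; exists a, b, c, d; rewrite E.
- case: E => *; subst; move: H1 => /negP []; apply/and3P.
  by split; apply: Huv; rewrite ?m1 ?m2 // !inE eqxx ?orbT.
- case: E => *; subst; move: H2 => /negP []; apply/and4P.
  by split; apply: Huv; rewrite ?m1 ?m2 // !inE eqxx ?orbT.
- case: E => *; subst; move: H3 => /negP []; apply/and3P.
  by split; apply: Huv; rewrite ?m1 ?m2 // !inE eqxx ?orbT.
- case: E => *; subst; left; exists x1, x2, x3, x4; split => //.
Qed.

Lemma nsP2413 : nosplitP P2413.
Proof. move=> a b c d; rewrite /P2413 => H; split; apply/negP; lia. Qed.
Lemma nsP3142 : nosplitP P3142.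
Proof. move=> a b c d; rewrite /P3142 => H; split; apply/negP; lia. Qed.
Lemma nsM2413 : nosplitM P2413.
Proof. move=> a b c d; rewrite /P2413 => H; split; apply/negP; lia. Qed.
Lemma nsM3142 : nosplitM P3142.
Proof. move=> a b c d; rewrite /P3142 => H; split; apply/negP; lia. Qed.

Lemma sepl_cat u v : ltall u v \/ ltall v u -> sepl u -> sepl v -> sepl (u ++ v).
Proof.
move=> [H|H] [Hu1 Hu2] [Hv1 Hv2]; split => Hh.
- by case: (has4_cat nsP2413 H Hh).
- by case: (has4_cat nsP3142 H Hh).
- by case: (has4_catM nsM2413 H Hh).
- by case: (has4_catM nsM3142 H Hh).
Qed.

Lemma has4_shift P k l : (forall a b c d, P (k + a) (k + b) (k + c) (k + d) = P a b c d) ->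
  has4 P (map (addn k) l) <-> has4 P l.
Proof.
move=> HP; split.
  case=> [a [b [c [d [/subseqP [m szm E] Pabcd]]]]].
  move: E; rewrite -map_mask; have sub := mask_subseq m l.
  case: (mask m l) sub => [|a' [|b' [|c' [|d' [|? ?]]]]] //= sub [Ea Eb Ec Ed].
  by exists a', b', c', d'; split => //; rewrite -HP -Ea -Eb -Ec -Ed.
case=> [a [b [c [d [sub Pabcd]]]]]; exists (k + a), (k + b), (k + c), (k + d); split.
  exact: (map_subseq (addn k) sub).
by rewrite HP.
Qed.

Lemma sepl_shift k l : sepl (map (addn k) l) <-> sepl l.
Proof.
have H1 := @has4_shift P2413 k l; have H2 := @has4_shift P3142 k l.
have E1 : forall a b c d, P2413 (k + a) (k + b) (k + c) (k + d) = P2413 a b c d.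
  by move=> a b c d; rewrite /P2413 !ltn_add2l.
have E2 : forall a b c d, P3142 (k + a) (k + b) (k + c) (k + d) = P3142 a b c d.
  by move=> a b c d; rewrite /P3142 !ltn_add2l.
rewrite /sepl (H1 E1) (H2 E2); tauto.
Qed.

Lemma desl_catP u v : ltall u v -> desl (u ++ v) = desl u + desl v.
Proof.
elim: u => [|x u IH]; first by [].
move=> /andP[xv uv] /=.
rewrite IH // addnA; congr (_ + _ + _).
case: u {IH uv} => [|y u] //=; case: v xv => [|z v] //= /andP[xz _].
by rewrite ltnNge ltnW.
Qed.

Lemma desl_catM u v : u != [::] -> v != [::] -> ltall v u -> desl (u ++ v) = (desl u + desl v).+1.
Proof.
move=> + vn /ltallP H; elim: u H => [|x u IH] H // _.
case: u IH H => [|y u] IH H.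
  rewrite /=; case: v vn H {IH} => [|z v] //= _ H; rewrite (H z x) ?inE ?eqxx //; lia.
have -> : desl (x :: y :: u) = (y < x) + desl (y :: u) by [].
transitivity ((y < x) + desl ((y :: u) ++ v)); first by [].
rewrite IH //; first lia.
by move=> a b av bu; apply: H; rewrite // inE bu orbT.
Qed.

Lemma desl_shift k l : desl (map (addn k) l) = desl l.
Proof.
have dc : forall x s, desl (x :: s) = (if s is y :: _ then y < x else false) + desl s by [].
elim: l => [|x l IH] //; rewrite map_cons dc IH [RHS]dc; congr (_ + _).
by case: l {IH} => //= y l; rewrite ltn_add2l.
Qed.

Definition psplit (l : seq nat) k := all (fun x => x < k) (take k l).
Definition msplit (l : seq nat) k := all (fun x => size l - k <= x) (take k l).
Definition pdec l := has (psplit l) (iota 1 (size l).-1).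
Definition mdec l := has (msplit l) (iota 1 (size l).-1).

Lemma Wprops n l : l \in W n ->
  [/\ size l = n, uniq l, (forall x, (x \in l) = (x < n)) & sepl l].
Proof.
case/memW => pl sl; split => //.
- by rewrite (perm_size pl) size_iota.
- by rewrite (perm_uniq pl) iota_uniq.
- by move=> x; rewrite (perm_mem pl) mem_iota.
Qed.

Lemma psplit_mem l k : uniq l -> k <= size l -> psplit l k -> take k l =i iota 0 k.
Proof.
move=> ul kl /allP H.
have H1 : {subset take k l <= iota 0 k} by move=> x /H; rewrite mem_iota.
have H2 : size (iota 0 k) <= size (take k l) by rewrite size_iota size_takel.
by have [_ E] := uniq_min_size (take_uniq k ul) H1 H2.
Qed.

Lemma msplit_mem l k : uniq l -> (forall x, x \in l -> x < size l) -> k <= size l ->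
  msplit l k -> take k l =i iota (size l - k) k.
Proof.
move=> ul lt kl /allP H.
have H1 : {subset take k l <= iota (size l - k) k}.
  move=> x xt; rewrite mem_iota; move: (H x xt) (lt x (mem_take xt)) => /= h1 h2; lia.
have H2 : size (iota (size l - k) k) <= size (take k l) by rewrite size_iota size_takel.
by have [_ E] := uniq_min_size (take_uniq k ul) H1 H2.
Qed.

Lemma dec_or n l : l \in W n -> 2 <= n -> pdec l || mdec l.
Proof.
case/Wprops => sz ul lt sl n2.
have sz2 : 2 <= size l by rewrite sz.
have [u [v [un vn E Huv]]] := decomp ul sz2 sl.
have szuv : size u + size v = n by rewrite -sz E size_cat.
have ku : 0 < size u by case: u un {E Huv szuv}.
have kv : 0 < size v by case: v vn {E Huv szuv}.
have ki : size u \in iota 1 (size l).-1 by rewrite mem_iota sz; lia.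
have tk : take (size u) l = u by rewrite E take_size_cat.
case: Huv => /ltallP Huv; apply/orP; [left|right]; apply/hasP; exists (size u) => //.
  rewrite /psplit tk; apply/allP => x xu.
  have xn : x < n by rewrite -lt E mem_cat xu.
  have sub : {subset iota 0 x.+1 <= u}.
    move=> y; rewrite mem_iota /= => yx.
    have : y \in u ++ v by rewrite -E lt; lia.
    rewrite mem_cat => /orP[//|yv]; have := Huv x y xu yv; lia.
  by have := uniq_leq_size (iota_uniq 0 x.+1) sub; rewrite size_iota.
rewrite /msplit tk; apply/allP => x xu.
have xn : x < n by rewrite -lt E mem_cat xu.
have sub : {subset iota x (n - x) <= u}.
  move=> y; rewrite mem_iota /= => /andP[xy yn].
  have : y \in u ++ v by rewrite -E lt; lia.
  rewrite mem_cat => /orP[//|yv]; have := Huv y x yv xu; lia.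
have := uniq_leq_size (iota_uniq x (n - x)) sub; rewrite size_iota sz; lia.
Qed.

Lemma dec_excl n l : l \in W n -> pdec l -> mdec l -> False.
Proof.
case/Wprops => sz ul lt sl /hasP [k ki pk] /hasP [k' ki' mk].
move: ki ki'; rewrite !mem_iota sz => /andP[k1 kn] /andP[k1' kn'].
have lt' : forall x, x \in l -> x < size l by move=> x; rewrite lt sz.
have kl : k <= size l by lia.
have kl' : k' <= size l by lia.
have Ep := psplit_mem ul kl pk.
have Em := msplit_mem ul lt' kl' mk.
rewrite sz in Em.
case: (leqP k k') => kk.
  have : 0 \in take k l by rewrite Ep mem_iota; lia.
  rewrite -(take_takel _ kk) => /mem_take; rewrite Em mem_iota; lia.
have : n.-1 \in take k' l by rewrite Em mem_iota; lia.
rewrite -(take_takel _ (ltnW kk)) => /mem_take; rewrite Ep mem_iota; lia.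
Qed.

Lemma npdec_mdec n l : l \in W n -> 2 <= n -> ~~ pdec l = mdec l.
Proof.
move=> lW n2; have := dec_or lW n2; have := dec_excl lW.
by case: (pdec l); case: (mdec l) => // /(_ isT isT).
Qed.

Lemma big_part (T : eqType) (r : seq T) (ks : seq nat) (P : pred T) (Q : nat -> pred T)
  (G : T -> {poly int}) :
  uniq ks ->
  (forall l, l \in r -> P l -> exists2 k : nat, k \in ks & Q k l) ->
  (forall l (k1 k2 : nat), l \in r -> k1 \in ks -> k2 \in ks -> Q k1 l -> Q k2 l -> k1 = k2) ->
  (forall l (k : nat), l \in r -> k \in ks -> Q k l -> P l) ->
  (\sum_(l <- r | P l) G l = \sum_(k <- ks) \sum_(l <- r | Q k l) G l)%R.
Proof.
move=> uks ex un imp.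
rewrite [RHS](eq_bigr (fun k => \sum_(l <- r) (if Q k l then G l else 0))%R); last first.
  by move=> k _; rewrite big_mkcond.
rewrite exchange_big /= big_mkcond /= big_seq [RHS]big_seq; apply: eq_bigr => l lr.
case: (boolP (P l)) => Pl.
  have [k0 k0ks Qk0] := ex l lr Pl.
  rewrite -big_mkcond -big_filter (_ : filter (Q^~ l) ks = [:: k0]) ?big_seq1 //.
  rewrite -(filter_pred1_uniq uks k0ks); apply: eq_in_filter => k kks.
  by apply/idP/eqP => [Qk|->//]; exact: un l k k0 lr kks k0ks Qk Qk0.
rewrite big_seq big1 // => k kks; case: ifP => // Qk.
by have := imp l k lr kks Qk; rewrite (negbTE Pl).
Qed.

Lemma sum_mem_eq (r1 r2 : seq (seq nat)) (G : seq nat -> {poly int}) :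
  uniq r1 -> uniq r2 -> r1 =i r2 -> (\sum_(x <- r1) G x = \sum_(x <- r2) G x)%R.
Proof. by move=> u1 u2 E; apply: perm_big; apply: uniq_perm. Qed.

Lemma take_drop_disj (l : seq nat) k x : uniq l -> x \in drop k l -> x \notin take k l.
Proof.
move=> ul xd; have := ul; rewrite -{1}(cat_take_drop k l) cat_uniq => /and3P[_ /hasPn H _].
by have := H x xd.
Qed.

Lemma psum n (G : seq nat -> {poly int}) :
  (\sum_(l <- W n | pdec l) G l =
   \sum_(k <- iota 1 n.-1) \sum_(s <- W k | ~~ pdec s)
        \sum_(t <- W (n - k)) G (s ++ map (addn k) t))%R.
Proof.
rewrite (@big_part _ _ (iota 1 n.-1) _ (fun k l => psplit l k && ~~ pdec (take k l))); first last.
- move=> l k lW kks /andP[pk _]; case/Wprops: lW => sz _ _ _.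
  by apply/hasP; exists k => //; rewrite sz.
- move=> l k1 k2 lW; case/Wprops: lW => sz ul _ _.
  rewrite !mem_iota => /andP[k11 k1n] /andP[k21 k2n] /andP[p1 n1] /andP[p2 n2].
  case: (ltngtP k1 k2) => [h|h|//]; exfalso.
    move/negP: n2; apply; apply/hasP; exists k1.
      by rewrite mem_iota size_takel ?sz; lia.
    by rewrite /psplit take_takel //; lia.
  move/negP: n1; apply; apply/hasP; exists k2.
    by rewrite mem_iota size_takel ?sz; lia.
  by rewrite /psplit take_takel //; lia.
- move=> l lW pl.
  have exk : exists k, (k \in iota 1 n.-1) && psplit l k.
    case/hasP: pl => k ki pk; exists k; case/Wprops: lW => sz _ _ _.
    by rewrite -sz ki.
  case: (ex_minnP exk) => k /andP[ki pk] kmin; exists k => //.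
  rewrite pk /=; apply/hasP => [[k' k'i pk']].
  case/Wprops: lW => sz _ _ _.
  move: ki; rewrite mem_iota => /andP[k1 kn].
  have kl : k <= size l by rewrite sz; lia.
  move: k'i; rewrite mem_iota size_takel // => /andP[k'1 k'k].
  have : k <= k'.
    apply: kmin; rewrite mem_iota; apply/andP; split; first lia.
    move: pk'; rewrite /psplit take_takel //; lia.
  lia.
- exact: iota_uniq.
rewrite big_seq [RHS]big_seq; apply: eq_bigr => k; rewrite mem_iota => /andP[k1 kn].
have kn' : k < n by lia.
rewrite -big_filter -[RHS]big_filter.
rewrite -(big_allpairs_dep (h := fun (s : seq nat) (t : seq nat) => s ++ map (addn k) t) (r2 := fun=> W (n - k))).
apply: sum_mem_eq.
- exact: filter_uniq (W_uniq n).
- apply: allpairs_uniq; [exact: filter_uniq (W_uniq k) | exact: W_uniq | ].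
  move=> [s1 t1] [s2 t2] /allpairsP [[a b] /= [ai bi [-> ->]]].
  move=> /allpairsP [[c d] /= [ci di [-> ->]]] /= E.
  move: ai ci; rewrite !mem_filter => /andP[_ /Wprops[sa _ _ _]] /andP[_ /Wprops[sc _ _ _]].
  have := congr1 (take k) E; rewrite !take_size_cat // => Es.
  have := congr1 (drop k) E; rewrite !drop_size_cat // => /(inj_map (@addnI k)) Et.
  by rewrite Es Et.
move=> l; rewrite mem_filter; apply/andP/allpairsP => [[/andP[pk npk] lW]|[[s t] /= [si ti ->]]].
  case/Wprops: (lW) => sz ul lt sl.
  have kl : k <= size l by lia.
  have Ep := psplit_mem ul kl pk.
  have dk : forall x, x \in drop k l -> k <= x < n.
    move=> x xd; have := take_drop_disj ul xd; rewrite Ep mem_iota -lt (mem_drop xd) /=.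
    lia.
  exists (take k l, map (subn^~ k) (drop k l)) => /=; split.
  - rewrite mem_filter npk /=; apply/memW; split; last first.
      exact: sepl_sub (take_subseq _ _) sl.
    by apply: uniq_perm; rewrite ?take_uniq ?iota_uniq.
  - apply/memW; split.
      apply: uniq_perm; rewrite ?iota_uniq //.
        rewrite map_inj_in_uniq ?drop_uniq // => x y xd yd.
        by have := dk x xd; have := dk y yd; lia.
      move=> y; rewrite mem_iota /=; apply/mapP/idP => [[x xd ->]|yl].
        by have := dk x xd; lia.
      exists (y + k); last by rewrite addnK.
      have : y + k \in l by rewrite lt; lia.
      rewrite -{1}(cat_take_drop k l) mem_cat Ep mem_iota.
      case/orP => //; lia.
    apply/(sepl_shift k); rewrite -map_comp map_id_in.
      exact: sepl_sub (drop_subseq _ _) sl.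
    by move=> x xd /=; have := dk x xd; lia.
  - rewrite -map_comp map_id_in ?cat_take_drop // => x xd /=.
    by have := dk x xd; lia.
move: si; rewrite mem_filter => /andP[nps sW].
case/Wprops: (sW) => szs us lts sls.
case/Wprops: (ti) => szt ut ltt slt.
rewrite take_size_cat // nps andbT; split.
  by rewrite /psplit take_size_cat //; apply/allP => x; rewrite lts.
apply/memW; split.
  have -> : iota 0 n = iota 0 k ++ iota k (n - k) by rewrite -{1}(subnKC (ltnW kn')) iotaD.
  apply: perm_cat.
    by apply: uniq_perm; rewrite ?iota_uniq // => x; rewrite lts mem_iota.
  have -> : iota k (n - k) = map (addn k) (iota 0 (n - k)) by rewrite -iotaDl addn0.
  by apply: perm_map; case/memW: ti.
apply: sepl_cat => //; last by apply/sepl_shift.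
left; apply/ltallP => x y; rewrite lts => xk /mapP [z _ ->]; lia.
Qed.

Lemma msum n (G : seq nat -> {poly int}) :
  (\sum_(l <- W n | mdec l) G l =
   \sum_(k <- iota 1 n.-1) \sum_(s <- W k | ~~ mdec s)
        \sum_(t <- W (n - k)) G (map (addn (n - k)) s ++ t))%R.
Proof.
rewrite (@big_part _ _ (iota 1 n.-1) _
   (fun k l => msplit l k && ~~ mdec (map (subn^~ (n - k)) (take k l)))); first last.
- move=> l k lW kks /andP[pk _]; case/Wprops: lW => sz _ _ _.
  by apply/hasP; exists k => //; rewrite sz.
- move=> l k1 k2 lW; case/Wprops: lW => sz ul _ _.
  rewrite !mem_iota => /andP[k11 k1n] /andP[k21 k2n] /andP[p1 n1] /andP[p2 n2].
  case: (ltngtP k1 k2) => [h|h|//]; exfalso.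
    move/negP: n2; apply; apply/hasP; exists k1.
      by rewrite mem_iota size_map size_takel ?sz; lia.
    rewrite /msplit size_map size_takel ?sz; last lia.
    rewrite -map_take take_takel; last lia.
    apply/allP => y /mapP [x xt ->]; move: p1; rewrite /msplit sz => /allP /(_ x xt).
    lia.
  move/negP: n1; apply; apply/hasP; exists k2.
    by rewrite mem_iota size_map size_takel ?sz; lia.
  rewrite /msplit size_map size_takel ?sz; last lia.
  rewrite -map_take take_takel; last lia.
  apply/allP => y /mapP [x xt ->]; move: p2; rewrite /msplit sz => /allP /(_ x xt).
  lia.
- move=> l lW pl.
  have exk : exists k, (k \in iota 1 n.-1) && msplit l k.
    case/hasP: pl => k ki pk; exists k; case/Wprops: lW => sz _ _ _.
    by rewrite -sz ki.
  case: (ex_minnP exk) => k /andP[ki pk] kmin; exists k => //.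
  rewrite pk /=; apply/hasP => [[k' k'i pk']].
  case/Wprops: lW => sz _ _ _.
  move: ki; rewrite mem_iota => /andP[k1 kn].
  have kl : k <= size l by rewrite sz; lia.
  move: k'i; rewrite mem_iota size_map size_takel // => /andP[k'1 k'k].
  have : k <= k'.
    apply: kmin; rewrite mem_iota; apply/andP; split; first lia.
    apply/allP => x xt.
    have k'k2 : k' <= k by lia.
    have xk : x \in take k l by move: xt; rewrite -(take_takel l k'k2) => /mem_take.
    move: pk => /allP /(_ x xk); rewrite sz /= => h1.
    move: pk'; rewrite /msplit size_map size_takel // -map_take take_takel; last lia.
    move=> /allP /(_ _ (map_f (subn^~ (n - k)) xt)) /=; lia.
  lia.
- exact: iota_uniq.
rewrite big_seq [RHS]big_seq; apply: eq_bigr => k; rewrite mem_iota => /andP[k1 kn].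
have kn' : k < n by lia.
rewrite -big_filter -[RHS]big_filter.
rewrite -(big_allpairs_dep (h := fun (s : seq nat) (t : seq nat) => map (addn (n - k)) s ++ t)
           (r2 := fun=> W (n - k))).
apply: sum_mem_eq.
- exact: filter_uniq (W_uniq n).
- apply: allpairs_uniq; [exact: filter_uniq (W_uniq k) | exact: W_uniq | ].
  move=> [s1 t1] [s2 t2] /allpairsP [[a b] /= [ai bi [-> ->]]].
  move=> /allpairsP [[c d] /= [ci di [-> ->]]] /= E.
  move: ai ci; rewrite !mem_filter => /andP[_ /Wprops[sa _ _ _]] /andP[_ /Wprops[sc _ _ _]].
  have := congr1 (take k) E; rewrite !take_size_cat ?size_map //.
  move=> /(inj_map (@addnI (n - k))) Es.
  have := congr1 (drop k) E; rewrite !drop_size_cat ?size_map // => Et.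
  by rewrite Es Et.
move=> l; rewrite mem_filter; apply/andP/allpairsP => [[/andP[pk npk] lW]|[[s t] /= [si ti ->]]].
  case/Wprops: (lW) => sz ul lt sl.
  have kl : k <= size l by lia.
  have lt' : forall x, x \in l -> x < size l by move=> x; rewrite lt sz.
  have Em := msplit_mem ul lt' kl pk; rewrite sz in Em.
  have tk : forall x, x \in take k l -> n - k <= x < n.
    by move=> x; rewrite Em mem_iota; lia.
  have dk : forall x, x \in drop k l -> x < n - k.
    move=> x xd; have := take_drop_disj ul xd; rewrite Em mem_iota.
    have := lt x; rewrite (mem_drop xd) => /esym; lia.
  exists (map (subn^~ (n - k)) (take k l), drop k l) => /=; split.
  - rewrite mem_filter npk /=; apply/memW; split.
      apply: uniq_perm; rewrite ?iota_uniq //.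
        rewrite map_inj_in_uniq ?take_uniq // => x y xd yd.
        by have := tk x xd; have := tk y yd; lia.
      move=> y; rewrite mem_iota /=; apply/mapP/idP => [[x xd ->]|yl].
        by have := tk x xd; lia.
      exists (y + (n - k)); last by rewrite addnK.
      by rewrite Em mem_iota; lia.
    apply/(sepl_shift (n - k)); rewrite -map_comp map_id_in.
      exact: sepl_sub (take_subseq _ _) sl.
    by move=> x xd /=; have := tk x xd; lia.
  - apply/memW; split.
      apply: uniq_perm; rewrite ?iota_uniq ?drop_uniq //.
      move=> y; rewrite mem_iota /=; apply/idP/idP => [/dk //|yl].
      have : y \in l by rewrite lt; lia.
      rewrite -{1}(cat_take_drop k l) mem_cat Em mem_iota.
      case/orP => //; lia.
    exact: sepl_sub (drop_subseq _ _) sl.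
  - rewrite -map_comp map_id_in ?cat_take_drop // => x xd /=.
    by have := tk x xd; lia.
move: si; rewrite mem_filter => /andP[nms sW].
case/Wprops: (sW) => szs us lts sls.
case/Wprops: (ti) => szt ut ltt slt.
have szl : size (map (addn (n - k)) s ++ t) = n by rewrite size_cat size_map szs szt; lia.
rewrite take_size_cat ?size_map //; split.
  apply/andP; split.
    rewrite /msplit take_size_cat ?size_map // szl; apply/allP => x /mapP [y _ ->]; lia.
  rewrite -map_comp map_id_in //; move=> x _ /=; lia.
apply/memW; split.
  have -> : iota 0 n = iota 0 (n - k) ++ iota (n - k) k.
    by have := iotaD 0 (n - k) k; rewrite add0n subnK ?(ltnW kn').
  rewrite perm_catC; apply: perm_cat; first by case/memW: ti.
  have -> : iota (n - k) k = map (addn (n - k)) (iota 0 k) by rewrite -iotaDl addn0.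
  by apply: perm_map; case/memW: sW.
apply: sepl_cat => //; last by apply/sepl_shift.
right; apply/ltallP => x y; rewrite ltt => xk /mapP [z _ ->]; lia.
Qed.

Local Open Scope ring_scope.

Definition Ssum k : {poly int} := \sum_(l <- W k) F l.
Definition Asum k : {poly int} := \sum_(l <- W k | ~~ pdec l) F l.
Definition Bsum k : {poly int} := \sum_(l <- W k | ~~ mdec l) F l.
Definition Psum k : {poly int} := \sum_(l <- W k | pdec l) F l.
Definition Msum k : {poly int} := \sum_(l <- W k | mdec l) F l.

Lemma W1 : W 1 =i [:: [:: 0%N]].
Proof.
move=> l; rewrite inE; apply/idP/eqP => [/memW [pl _]|->].
  have := perm_size pl; rewrite size_iota; case: l pl => [|y [|? ?]] // pl _.
  by have := perm_mem pl y; rewrite !inE eqxx => /esym/eqP ->.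
apply/memW; split => //; split => -[a [b [c [d [/size_subseq /= H _]]]]] //.
Qed.

Lemma Ssum1 : Ssum 1 = 1.
Proof.
rewrite /Ssum (@sum_mem_eq (W 1) [:: [:: 0%N]] F (W_uniq 1) isT W1) big_seq1.
by rewrite /F /= expr0.
Qed.

Lemma Asum1 : Asum 1 = 1.
Proof.
rewrite /Asum big_seq_cond (eq_bigl (fun l => l \in W 1)) -?big_seq; first exact: Ssum1.
move=> l; case: (boolP (l \in W 1)) => // /Wprops [sz _ _ _].
by rewrite /pdec sz.
Qed.

Lemma Bsum1 : Bsum 1 = 1.
Proof.
rewrite /Bsum big_seq_cond (eq_bigl (fun l => l \in W 1)) -?big_seq; first exact: Ssum1.
move=> l; case: (boolP (l \in W 1)) => // /Wprops [sz _ _ _].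
by rewrite /mdec sz.
Qed.

Lemma SPM k : (2 <= k)%N -> Ssum k = Psum k + Msum k.
Proof.
move=> k2; rewrite /Ssum (bigID pdec) /=; congr (_ + _).
rewrite big_seq_cond [RHS]big_seq_cond; apply: eq_bigl => l.
by case: (boolP (l \in W k)) => // lW; rewrite (npdec_mdec lW).
Qed.

Lemma AM k : (2 <= k)%N -> Asum k = Msum k.
Proof.
move=> k2; rewrite /Asum /Msum big_seq_cond [RHS]big_seq_cond; apply: eq_bigl => l.
by case: (boolP (l \in W k)) => // lW; rewrite (npdec_mdec lW).
Qed.

Lemma BP k : (2 <= k)%N -> Bsum k = Psum k.
Proof.
move=> k2; rewrite /Bsum /Psum big_seq_cond [RHS]big_seq_cond; apply: eq_bigl => l.
by case: (boolP (l \in W k)) => // lW; rewrite -(npdec_mdec lW) //; case: (pdec l).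
Qed.

Lemma Pconv n : Psum n = \sum_(1 <= k < n) Asum k * Ssum (n - k).
Proof.
rewrite /Psum psum /index_iota subn1; apply: eq_bigr => k _.
rewrite /Asum /Ssum big_distrl /= big_seq_cond [RHS]big_seq_cond.
apply: eq_bigr => s /andP[sW _]; rewrite big_distrr /=; apply: eq_bigr => t _.
rewrite /F desl_catP ?desl_shift ?exprD //.
case/Wprops: sW => _ _ lts _; apply/ltallP => x y; rewrite lts => xk /mapP [z _ ->].
by apply: (leq_trans xk); rewrite leq_addr.
Qed.

Lemma Mconv n : Msum n = \sum_(1 <= k < n) 'X * Bsum k * Ssum (n - k).
Proof.
rewrite /Msum msum /index_iota subn1 big_seq [RHS]big_seq; apply: eq_bigr => k.
rewrite mem_iota => /andP[k1 kn].
rewrite /Bsum /Ssum -mulrA big_distrl mulr_sumr /= big_seq_cond [RHS]big_seq_cond.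
apply: eq_bigr => s /andP[sW _]; rewrite big_distrr mulr_sumr /= big_seq [RHS]big_seq.
apply: eq_bigr => t tW.
case/Wprops: sW => szs _ _ _; case/Wprops: tW => szt _ ltt _.
rewrite /F desl_catM ?desl_shift.
- by rewrite exprS exprD.
- by rewrite -size_eq0 size_map szs -lt0n.
- by rewrite -size_eq0 szt subn_eq0 -ltnNge; lia.
apply/ltallP => x y; rewrite ltt => xk /mapP [z _ ->].
by apply: (leq_trans xk); rewrite leq_addr.
Qed.

Lemma conv_nat (f g : nat -> {poly int}) i : f 0%N = 0 -> g 0%N = 0 ->
  \sum_(j < i.+1) f j * g (i - j)%N = \sum_(1 <= k < i) f k * g (i - k)%N.
Proof.
move=> f0 g0; case: i => [|i].
  by rewrite big_ord_recl big_ord0 f0 mul0r addr0 big_geq.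
rewrite big_ord_recl f0 mul0r add0r big_ord_recr /= subnn g0 mulr0 addr0.
rewrite big_add1 /= big_mkord; apply: eq_bigr => j _ /=.
by rewrite /bump /=.
Qed.

Definition eqm (N : nat) (p q : {poly {poly int}}) := forall i, (i <= N)%N -> p`_i = q`_i.

Lemma eqm_eq N p q : p = q -> eqm N p q.
Proof. by move=> ->. Qed.
Lemma eqm_sym N p q : eqm N p q -> eqm N q p.
Proof. by move=> H i iN; rewrite H. Qed.
Lemma eqm_trans N p q r : eqm N p q -> eqm N q r -> eqm N p r.
Proof. by move=> H1 H2 i iN; rewrite H1 ?H2. Qed.
Lemma eqm_add N p q p' q' : eqm N p p' -> eqm N q q' -> eqm N (p + q) (p' + q').
Proof. by move=> H1 H2 i iN; rewrite !coefD H1 ?H2. Qed.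
Lemma eqm_opp N p p' : eqm N p p' -> eqm N (- p) (- p').
Proof. by move=> H1 i iN; rewrite !coefN H1. Qed.
Lemma eqm_mul N p q p' q' : eqm N p p' -> eqm N q q' -> eqm N (p * q) (p' * q').
Proof.
move=> H1 H2 i iN; rewrite !coefM; apply: eq_bigr => j _.
by rewrite H1 ?H2 //; have := ltn_ord j; lia.
Qed.

Definition sq (f : nat -> {poly int}) k := if k == 0%N then 0 else f k.
Definition ser (f : nat -> {poly int}) N : {poly {poly int}} := \poly_(i < N.+1) sq f i.

Lemma coef_ser f N i : (i <= N)%N -> (ser f N)`_i = sq f i.
Proof. by move=> iN; rewrite coef_poly ltnS iN. Qed.

Lemma coef_serM f g N i : (i <= N)%N ->
  (ser f N * ser g N)`_i = \sum_(1 <= k < i) f k * g (i - k)%N.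
Proof.
move=> iN; rewrite coefM.
rewrite (eq_bigr (fun j : 'I_i.+1 => sq f j * sq g (i - j)%N)); last first.
  by move=> j _; rewrite !coef_ser //; have := ltn_ord j; lia.
rewrite conv_nat //; apply: eq_big_nat => k /andP[k1 ki].
rewrite /sq; case: eqP => [|_]; first lia.
by case: eqP => [|_] //; lia.
Qed.

Definition tX : {poly {poly int}} := ('X : {poly int})%:P.

Lemma e1 N : eqm N (ser Asum N) ('X + tX * (ser Bsum N * ser Ssum N)).
Proof.
move=> i iN; rewrite coefD coefCM coef_serM // coefX coef_ser //.
case: i iN => [|[|i]] iN /=.
- by rewrite big_geq // mulr0 addr0 /sq.
- by rewrite big_geq // mulr0 addr0 /sq /= Asum1.
rewrite /sq /= add0r AM // Mconv mulr_sumr; apply: eq_bigr => k _.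
by rewrite mulrA.
Qed.

Lemma e2 N : eqm N (ser Bsum N) ('X + ser Asum N * ser Ssum N).
Proof.
move=> i iN; rewrite coefD coef_serM // coefX coef_ser //.
case: i iN => [|[|i]] iN /=.
- by rewrite big_geq // addr0 /sq.
- by rewrite big_geq // addr0 /sq /= Bsum1.
by rewrite /sq /= add0r BP // Pconv.
Qed.

Lemma e3 N : eqm N (ser Ssum N) (ser Asum N + ser Bsum N - 'X).
Proof.
move=> i iN; rewrite coefB coefD coefX !coef_ser //.
case: i iN => [|[|i]] iN /=.
- by rewrite /sq /= ?mulr0n ?subr0 ?addr0.
- by rewrite /sq /= Asum1 Bsum1 Ssum1 addrK.
by rewrite /sq /= subr0 SPM // AM // BP // addrC.
Qed.

Lemma key N : eqm N (ser Ssum N - tX * (ser Ssum N * (ser Ssum N * ser Ssum N)))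
  ('X + 'X * ser Ssum N + tX * ('X * ser Ssum N) + tX * ('X * (ser Ssum N * ser Ssum N))).
Proof.
have E1 := @e1 N; have E2 := @e2 N; have E3 := @e3 N.
set S := ser Ssum N in E1 E2 E3 *; set A := ser Asum N in E1 E2 E3 *.
set B := ser Bsum N in E1 E2 E3 *.
have Hi : eqm N S (A * (1 + S)).
  apply: (eqm_trans E3).
  apply: (eqm_trans (q := A + ('X + A * S) - 'X)).
    apply: eqm_add; last exact: eqm_eq.
    by apply: eqm_add => //; exact: eqm_eq.
  by apply: eqm_eq; ring.
have Hii : eqm N (A * (1 - tX * S * S)) ('X * (1 + tX * S)).
  apply: (eqm_trans (q := A - tX * S * S * A)); first by apply: eqm_eq; ring.
  apply: (eqm_trans (q := ('X + tX * (('X + A * S) * S)) - tX * S * S * A)).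
    apply: eqm_add; last exact: eqm_eq.
    apply: (eqm_trans E1); apply: eqm_add; first exact: eqm_eq.
    apply: eqm_mul; first exact: eqm_eq.
    by apply: eqm_mul => //; exact: eqm_eq.
  by apply: eqm_eq; ring.
have Hiii : eqm N (S * (1 - tX * S * S)) ((1 + S) * ('X * (1 + tX * S))).
  apply: (eqm_trans (q := (A * (1 + S)) * (1 - tX * S * S))).
    by apply: eqm_mul => //; exact: eqm_eq.
  apply: (eqm_trans (q := (1 + S) * (A * (1 - tX * S * S)))); first by apply: eqm_eq; ring.
  by apply: eqm_mul => //; exact: eqm_eq.
apply: (eqm_trans (q := S * (1 - tX * S * S))); first by apply: eqm_eq; ring.
by apply: (eqm_trans Hiii); apply: eqm_eq; ring.
Qed.

Definition cc m : {poly int} := \sum_(1 <= k < m) Ssum k * Ssum (m - k)%N.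

Theorem theorem5p10 (n : nat) : (2 <= n)%N ->
  Spoly n =
    ((1 + 'X) * Spoly n.-1 +
     'X * \sum_(1 <= j < n.-1)
            Spoly j * (Spoly (n - j).-1 +
                       \sum_(1 <= i < n - j) Spoly i * Spoly (n - j - i)))%R.
Proof.
move=> n2.
have SW : forall k, Spoly k = Ssum k by move=> k; rewrite Spoly_W.
case: n n2 => [|n'] // n2; rewrite succnK.
set n := n'.+1.
have n1 : (1 <= n')%N by lia.
set T := \sum_(1 <= j < n') Ssum j * cc (n - j)%N.
have L1 : (ser Ssum n)`_n = Ssum n by rewrite coef_ser.
have L2 : (ser Ssum n * (ser Ssum n * ser Ssum n))`_n = T.
  rewrite coefM (eq_bigr (fun j : 'I_n.+1 => sq Ssum j * cc (n - j)%N)); last first.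
    move=> j _; rewrite coef_ser ?coef_serM //; have := ltn_ord j; lia.
  rewrite conv_nat //; last by rewrite /cc big_geq.
  have cc1 : cc 1 = 0 by rewrite /cc big_geq.
  rewrite big_nat_recr //= (_ : (n - n')%N = 1%N) ?subSnn // cc1 mulr0 addr0.
  apply: eq_big_nat => j /andP[j1 jn]; rewrite /sq; case: eqP => //; lia.
have L3 : (ser Ssum n)`_n' = Ssum n' by rewrite coef_ser // /sq; case: eqP => //; lia.
have L4 : (ser Ssum n * ser Ssum n)`_n' = cc n' by rewrite coef_serM.
have K := @key n n (leqnn n).
have n1f : (n == 1)%N = false by rewrite /n; apply/eqP; lia.
rewrite coefB coefCM L1 L2 !coefD coefX !coefCM !coefXM /= L3 L4 n1f mulr0n add0r in K.
have -> : \sum_(1 <= j < n') Spoly j * (Spoly (n - j).-1 +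
            \sum_(1 <= i < n - j) Spoly i * Spoly (n - j - i)) = cc n' + T.
  rewrite /T /cc -big_split /=; apply: eq_big_nat => j /andP[j1 jn].
  rewrite !SW mulrDr; congr (_ * Ssum _ + _); first lia.
  congr (_ * _); apply: eq_bigr => i _; by rewrite !SW.
rewrite !SW -(subrK ('X * T) (Ssum n)) K; ring.
Qed.
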